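(* Let $\mathfrak g$ be of type $A_n$, $b\in\mathcal B(\infty)$, $i\in I$, and let $m=m_i(b)$ and $m^\ast=m_i^\ast(b)$. Then for $1\le s\le i$, $\Sigma^\ast_s(\widetilde f_i(b))=\Sigma^\ast_s(b)+1$ if $m=1$ and $s=1$, and $\Sigma^\ast_s(\widetilde f_i(b))=\Sigma^\ast_s(b)$ otherwise; and for $1\le s\le n+1-i$, $\Sigma_s(\widetilde f_i^\ast(b))=\Sigma_s(b)+1$ if $m^\ast=1$ and $s=1$, and $\Sigma_s(\widetilde f_i^\ast(b))=\Sigma_s(b)$ otherwise.
   Context: $I=\{1,\dots,n\}$. $\mathcal I=\{(s,t)\in\mathbb Z_{>0}\times I:s+t\le n+1\}$; $\mathcal B(\infty)$ is the set of $b=(b_{s,t})_{(s,t)\in\mathcal I}\in\mathbb Z_{\ge0}^{\mathcal I}$ with $b_{1,k}\ge b_{2,k-1}\ge\dots\ge b_{k,1}$ for $1\le k\le n$. Convention: $b_{s,t}=0$, $\mathbf e_{s,t}=0$ for $(s,t)\notin\mathcal I$. $\partial_{s,t}(b)=b_{s,t}-b_{s,t+1}-b_{s+1,t-1}+b_{s+1,t}$, $\partial^\ast_{s,t}(b)=b_{s-1,t}-b_{s-1,t+1}-b_{s,t-1}+b_{s,t}$. For $1\le k\le n+1-i$: $\Sigma_k(b)=\sum_{s=k}^{n+1-i}\partial_{s,i}(b)$, $m_i(b)$ the smallest $k$ maximizing $\Sigma_k(b)$, $\widetilde f_i(b)=b+\mathbf e_{m_i(b),i}$. For $1\le k\le i$: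 $\Sigma^\ast_k(b)=\sum_{t=1}^k\partial^\ast_{t,i+1-t}(b)$, $m_i^\ast(b)$ the smallest $k$ maximizing $\Sigma^\ast_k(b)$, $\widetilde f_i^\ast(b)=b+\sum_{t=1}^{m_i^\ast(b)}(\mathbf e_{t,i+1-t}-\mathbf e_{t-1,i+1-t})$. *)

(* Defs.v *)
From mathcomp Require Import all_boot all_order all_algebra.
Set Implicit Arguments. Unset Strict Implicit. Unset Printing Implicit Defensive.
Import Order.TTheory GRing.Theory Num.Theory.
Local Open Scope ring_scope.

(* An element b of B(infinity) for type A_n is represented as a function
   b : nat -> nat -> int, b s t = b_{s,t}, which vanishes outside the index set
   \mathcal I (this realises the convention b_{s,t} = 0 for (s,t) \notin \mathcal I). *)
Definition inI (n s t : nat) : bool := [&& 0 < s, 0 < t, t <= n & s + t <= n.+1]%N.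

Definition inBinf (n : nat) (b : nat -> nat -> int) : Prop :=
  [/\ (forall s t, ~~ inI n s t -> b s t = 0),
      (forall s t, 0 <= b s t) &
      (forall s t, (0 < s)%N -> (1 < t)%N -> (s + t <= n.+1)%N ->
                   b s.+1 t.-1 <= b s t)].

Definition e_ (n s t : nat) : nat -> nat -> int :=
  fun s' t' => if inI n s t && (s' == s) && (t' == t) then 1 else 0.

Definition partial (b : nat -> nat -> int) (s t : nat) : int :=
  b s t - b s t.+1 - b s.+1 t.-1 + b s.+1 t.

Definition partialst (b : nat -> nat -> int) (s t : nat) : int :=
  b s.-1 t - b s.-1 t.+1 - b s t.-1 + b s t.

Definition Sigma (n i : nat) (b : nat -> nat -> int) (k : nat) : int :=
  \sum_(k <= s < (n.+1 - i).+1) partial b s i.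

Definition Sigmast (i : nat) (b : nat -> nat -> int) (k : nat) : int :=
  \sum_(1 <= t < k.+1) partialst b t (i.+1 - t).

(* smallest k in [lo, hi] (lo <= hi) maximizing F *)
Definition argmax_first (F : nat -> int) (lo hi : nat) : nat :=
  let ks := iota lo (hi.+1 - lo) in
  let M := foldr Num.max (F lo) (map F ks) in
  (lo + find (fun k => F k == M) ks)%N.

Definition m_i (n i : nat) (b : nat -> nat -> int) : nat :=
  argmax_first (Sigma n i b) 1 (n.+1 - i).

Definition mst_i (i : nat) (b : nat -> nat -> int) : nat :=
  argmax_first (Sigmast i b) 1 i.

Definition ftilde (n i : nat) (b : nat -> nat -> int) : nat -> nat -> int :=
  fun s t => b s t + e_ n (m_i n i b) i s t.

Definition ftildest (n i : nat) (b : nat -> nat -> int) : nat -> nat -> int :=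
  fun s t => b s t + \sum_(1 <= u < (mst_i i b).+1)
                       (e_ n u (i.+1 - u) s t - e_ n u.-1 (i.+1 - u) s t).

(* Main.v *)
Require Import Defs.
From mathcomp Require Import all_boot all_order all_algebra.
From mathcomp Require Import zify ring.
Import Order.TTheory GRing.Theory Num.Theory.
Local Open Scope ring_scope.

Lemma pst_e n m i t : (1 <= i <= n)%N -> (1 <= t <= i)%N ->
  partialst (e_ n m i) t (i.+1 - t) =
  (if (t == 1%N) && (m == 1%N) then 1 else 0) - (if (t == 2%N) && (m == 1%N) then 1 else 0).
Proof.
move=> Hi Ht; rewrite /partialst.
have E1 : e_ n m i t.-1 (i.+1-t) = 0 by rewrite /e_ /inI; case: ifPn => //; lia.
have E2 : e_ n m i t.-1 (i.+1-t).+1 = if (t==2%N)&&(m==1%N) then 1 else 0.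
  by rewrite /e_ /inI; do 2 (case: ifPn => ?); lia.
have E3 : e_ n m i t (i.+1-t).-1 = 0 by rewrite /e_ /inI; case: ifPn => //; lia.
have E4 : e_ n m i t (i.+1-t) = if (t==1%N)&&(m==1%N) then 1 else 0.
  by rewrite /e_ /inI; do 2 (case: ifPn => ?); lia.
rewrite E1 E2 E3 E4; ring.
Qed.

Definition g n i u : nat -> nat -> int :=
  fun s t => e_ n u (i.+1 - u) s t - e_ n u.-1 (i.+1 - u) s t.

Ltac ez := rewrite /e_ /inI; do ? (case: ifPn => ?); lia.

Lemma p_g n i u s : (1 <= i <= n)%N -> (1 <= u)%N -> (1 <= s)%N ->
  partial (g n i u) s i =
  (if (s==1%N)&&(u==1%N) then 1 else 0) - (if [&& s==1%N, u==2%N & (2<=i)%N] then 1 else 0).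
Proof.
move=> Hi Hu Hs; rewrite /partial /g.
have E1 : e_ n u (i.+1-u) s i = if (s==1%N)&&(u==1%N) then 1 else 0 by ez.
have E2 : e_ n u.-1 (i.+1-u) s i = 0 by ez.
have E3 : e_ n u (i.+1-u) s i.+1 = 0 by ez.
have E4 : e_ n u.-1 (i.+1-u) s i.+1 = 0 by ez.
have E5 : e_ n u (i.+1-u) s.+1 i.-1 = if [&& s==1%N, u==2%N & (2<=i)%N] then 1 else 0 by ez.
have E6 : e_ n u.-1 (i.+1-u) s.+1 i.-1 = 0 by ez.
have E7 : e_ n u (i.+1-u) s.+1 i = 0 by ez.
have E8 : e_ n u.-1 (i.+1-u) s.+1 i = 0 by ez.
rewrite E1 E2 E3 E4 E5 E6 E7 E8; ring.
Qed.

Lemma sum_first (k N : nat) (F : nat -> int) : (1 <= k <= N)%N ->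
  (forall s, (2 <= s)%N -> F s = 0) ->
  \sum_(k <= s < N.+1) F s = if k == 1%N then F 1%N else 0.
Proof.
move=> /andP[Hk HkN] HF.
case: eqP HkN => [->|Hk1] HkN.
  rewrite big_ltn; last lia.
  rewrite big_nat_cond big1 ?addr0 // => s /andP[/andP[h _] _]; exact: HF.
rewrite big_nat_cond big1 // => s /andP[/andP[h _] _]; apply: HF; lia.
Qed.

Lemma sum_two (s : nat) (F : nat -> int) : (1 <= s)%N ->
  (forall t, (3 <= t)%N -> F t = 0) ->
  \sum_(1 <= t < s.+1) F t = if s == 1%N then F 1%N else F 1%N + F 2%N.
Proof.
move=> Hs HF; rewrite big_ltn //.
case: eqP => [->|Hs1]; first by rewrite big_geq ?addr0.
rewrite big_ltn; last lia.
rewrite big_nat_cond big1 ?addr0 // => t /andP[/andP[h _] _]; exact: HF.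
Qed.

Lemma Sigmast_add i (b d : nat -> nat -> int) k :
  Sigmast i (fun s t => b s t + d s t) k = Sigmast i b k + Sigmast i d k.
Proof.
rewrite /Sigmast (eq_bigr (fun t => partialst b t (i.+1 - t) + partialst d t (i.+1 - t))).
  by rewrite big_split.
move=> t _; rewrite /partialst; ring.
Qed.

Lemma Sigma_add_sum n i (b : nat -> nat -> int) (G : nat -> nat -> nat -> int) a c k :
  Sigma n i (fun s t => b s t + \sum_(a <= u < c) G u s t) k =
  Sigma n i b k + \sum_(a <= u < c) Sigma n i (G u) k.
Proof.
rewrite /Sigma [X in _ = _ + X]exchange_big_nat.
rewrite (eq_bigr (fun s => partial b s i + \sum_(a <= u < c) partial (G u) s i)).
  by rewrite big_split.
move=> s _; rewrite [in RHS]big_split !sumrB /partial /=; ring.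
Qed.

Lemma mst_ge1 i b : (1 <= mst_i i b)%N.
Proof. rewrite /mst_i /argmax_first; lia. Qed.

Lemma mst_1 b : mst_i 1 b = 1%N.
Proof. by rewrite /mst_i /argmax_first /= maxxx eqxx. Qed.

Lemma Sigma_g n i u k : (1 <= i <= n)%N -> (1 <= u)%N -> (1 <= k <= n.+1 - i)%N ->
  Sigma n i (g n i u) k =
  if k == 1%N then (if u == 1%N then 1 else 0) - (if (u == 2%N) && (2 <= i)%N then 1 else 0)
  else 0.
Proof.
move=> Hi Hu Hk; rewrite /Sigma (eq_big_nat _ _ (F2 := fun s =>
  (if (s==1%N)&&(u==1%N) then 1 else 0) - (if [&& s==1%N, u==2%N & (2<=i)%N] then 1 else 0))); last first.
  move=> s Hs; apply: p_g => //; lia.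
rewrite sum_first //.
move=> s Hs; have -> : (s == 1%N) = false by apply/negbTE; lia.
by rewrite /= subrr.
Qed.

Theorem lemma6p8 (n : nat) (b : nat -> nat -> int) (i : nat) :
  (1 <= n)%N -> (1 <= i <= n)%N -> inBinf n b ->
  (forall s, (1 <= s <= i)%N ->
     Sigmast i (ftilde n i b) s =
     Sigmast i b s + (if (m_i n i b == 1%N) && (s == 1%N) then 1 else 0)) /\
  (forall s, (1 <= s <= n.+1 - i)%N ->
     Sigma n i (ftildest n i b) s =
     Sigma n i b s + (if (mst_i i b == 1%N) && (s == 1%N) then 1 else 0)).
Proof.
move=> Hn Hi _; split.
- move=> s Hs; rewrite /ftilde Sigmast_add; congr (_ + _).
  set m := m_i n i b.
  rewrite /Sigmast (eq_big_nat _ _ (F2 := fun t => (if (t == 1%N) && (m == 1%N) then 1 else 0)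
     - (if (t == 2%N) && (m == 1%N) then 1 else 0))); last first.
    move=> t Ht; apply: pst_e => //; lia.
  rewrite sum_two; last first.
  + move=> t Ht.
    have -> : (t == 1%N) = false by apply/negbTE; lia.
    have -> : (t == 2%N) = false by apply/negbTE; lia.
    by rewrite /= subrr.
  + lia.
  by case: (s == 1%N); case: (m == 1%N) => /=; lia.
- move=> k Hk; rewrite /ftildest Sigma_add_sum; congr (_ + _).
  have HM := mst_ge1 i b.
  have HM1 : i = 1%N -> mst_i i b = 1%N by move=> ->; exact: mst_1.
  set M := mst_i i b in HM HM1 *.
  rewrite (eq_big_nat _ _ (F2 := fun u => if k == 1%N then (if u == 1%N then 1 else 0)
     - (if (u == 2%N) && (2 <= i)%N then 1 else 0) else 0)); last first.
    move=> u Hu; apply: Sigma_g => //; lia.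
  rewrite sum_two //; last first.
    move=> t Ht.
    have -> : (t == 1%N) = false by apply/negbTE; lia.
    have -> : (t == 2%N) = false by apply/negbTE; lia.
    by rewrite /= subrr if_same.
  case: (k == 1%N); last by rewrite andbF if_same.
  case HMe : (M == 1%N); first by rewrite /=; lia.
  have Hi2 : (2 <= i)%N.
    case: (i =P 1%N) => [/HM1 E|]; last lia.
    move/negbT: HMe; lia.
  rewrite Hi2 /=; lia.
Qed.
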